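(* Consider a system $\Sigma$ undergoing an irreversible isobaric vitrification (cooling) process along a path from an initial equilibrium supercooled-liquid state A at medium temperature $T_{0\text{A}}$ (above the glass-transition onset $T_{0\text{g}}$) to a state $\text{A}_0$ at absolute zero, with no latent heat along the path. Let $S(0)\equiv S_{\text{R}}$ be the entropy of the system at absolute zero (the residual entropy) and let $$S_{\text{expt}}(0)\doteq S(T_{0\text{A}})+\int_{T_{0\text{A}}}^{0} C_P\,\frac{dT_0}{T_0}$$ be the experimentally (calorimetrically) measured, extrapolated entropy at absolute zero. Then $$S_{\text{R}}\equiv S(0)>S_{\text{expt}}(0).$$
   Context: The system $\Sigma$ is in contact with a very large medium $\widetilde{\Sigma}$ that is always in equilibrium at temperature $T_0$ and pressure $P_0$; together they form an isolated system. Every entropy change of the system decomposes as $dS=d_{\text{e}}S+d_{\text{i}}S$, where $d_{\text{e}}S=-d_{\text{e}}Q/T_0\equiv C_P\,dT_0/T_0$ is the entropy exchanged with the medium ($d_{\text{e}}Q$ being the heat given out by the system to the medium at medium temperature $T_0$, and $C_P$ the measured isobaric heat capacity), and $d_{\text{i}}S$ is the entropy generated by irreversible processes inside the system. The second law states $d_{\text{i}}S\ge 0$, with strict inequality $d_{\text{i}}S>0$ for an irreversible process; vitrification (with observation time shorter than the equilibration time below $T_{0\text{g}}$) is an irreversible process. Entropy is treated as a state function of the system's state variables (internal-equilibrium assumption). *)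

(* Defs.v *)
From Stdlib Require Import Reals.
From Coquelicot Require Import Coquelicot.
Open Scope R_scope.

Definition S_expt (S CP : R -> R) (T0A : R) : R :=
  S T0A + RInt (fun T0 => CP T0 / T0) T0A 0.

(* Main.v *)
Require Import Defs.
From Stdlib Require Import Reals Lra.
From Coquelicot Require Import Coquelicot.
Open Scope R_scope.



Section X.
Variables (T0A : R) (S CP sigma : R -> R).
Let f := fun T0 => CP T0 / T0.
Hypothesis Hc : forall T0, 0 < T0 < T0A -> continuous CP T0.
Hypothesis Hi : ex_RInt f 0 T0A.
Hypothesis Hd : forall T0, 0 < T0 < T0A -> is_derive S T0 (CP T0 / T0 + sigma T0).

Let G := fun x => S x - RInt f 0 x.

Lemma G_der x : 0 < x < T0A -> is_derive G x (sigma x).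
Proof.
  intros Hx.
  assert (HF : is_derive (RInt f 0) x (f x)).
  { apply (is_derive_RInt f (RInt f 0) 0 x).
    - assert (Hl : locally x (fun y => 0 < y < T0A)).
      { apply (open_and (fun y => 0 < y) (fun y => y < T0A)).
        apply open_gt. apply open_lt. exact Hx. }
      refine (filter_imp _ _ _ Hl). intros y Hy.
      apply (RInt_correct (V:=R_CompleteNormedModule)). apply (ex_RInt_Chasles_1 (V:=R_CompleteNormedModule)) with T0A; [lra|exact Hi].
    - unfold f. apply (continuous_mult CP (fun t => / t)).
      apply Hc; exact Hx.
      apply continuous_Rinv_comp. apply continuous_id. lra. }
  unfold G.
  replace (sigma x) with ((CP x / x + sigma x) - f x) by (unfold f; ring).
  apply (is_derive_minus S (RInt f 0)). apply Hd; exact Hx. exact HF.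
Qed.

Lemma G_mvt a b : 0 < a -> a < b -> b < T0A ->
  exists xi, a <= xi <= b /\ G b - G a = sigma xi * (b - a).
Proof.
  intros Ha Hab Hb.
  destruct (MVT_gen G a b sigma) as [xi [Hxi E]].
  - rewrite Rmin_left by lra; rewrite Rmax_right by lra.
    intros x Hx; apply G_der; lra.
  - rewrite Rmin_left by lra; rewrite Rmax_right by lra.
    intros x Hx. apply continuity_pt_filterlim.
    apply (ex_derive_continuous (K:=R_AbsRing) (V:=R_NormedModule)). exists (sigma x). apply G_der; lra.
  - exists xi. rewrite Rmin_left in Hxi by lra; rewrite Rmax_right in Hxi by lra.
    split; auto.
Qed.

Lemma F_lip M : (forall t, 0 <= t <= T0A -> Rabs (f t) <= M) ->
  forall x y, 0 <= x -> x <= y -> y <= T0A ->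
  Rabs (RInt f 0 y - RInt f 0 x) <= (y - x) * M.
Proof.
  intros HM x y H0 Hxy HyT.
  assert (H1 : ex_RInt f 0 y) by (apply (ex_RInt_Chasles_1 (V:=R_CompleteNormedModule)) with T0A; [lra|exact Hi]).
  assert (H2 : ex_RInt f 0 x) by (apply (ex_RInt_Chasles_1 (V:=R_CompleteNormedModule)) with y; [lra|exact H1]).
  assert (H3 : ex_RInt f x y) by (apply (ex_RInt_Chasles_2 (V:=R_CompleteNormedModule)) with 0; [lra|exact H1]).
  rewrite <- (RInt_Chasles (V:=R_CompleteNormedModule) f 0 x y H2 H3).
  change (plus (RInt f 0 x) (RInt f x y)) with (RInt f 0 x + RInt f x y).
  assert (E : forall u v : R, u + v - u = v) by (intros; ring). rewrite E.
  apply abs_RInt_le_const; auto.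
  intros t Ht; apply HM; lra.
Qed.


Lemma lim_right0 e : 0 < e -> filterlim S (at_right 0) (locally (S 0)) ->
  exists d, 0 < d /\ forall y, 0 < y < d -> Rabs (S y - S 0) < e.
Proof.
  intros He H. apply (filterlim_locally (F:=at_right 0)) with (eps := mkposreal e He) in H.
  destruct H as [d Hdd]. exists d. split. apply cond_pos.
  intros y Hy. apply (Hdd y). 2: lra.
  unfold ball; simpl; unfold AbsRing_ball, abs, minus, plus, opp; simpl.
  rewrite Rabs_right; lra.
Qed.

Lemma lim_left e : 0 < e -> filterlim S (at_left T0A) (locally (S T0A)) ->
  exists d, 0 < d /\ forall y, T0A - d < y < T0A -> Rabs (S y - S T0A) < e.
Proof.
  intros He H. apply (filterlim_locally (F:=at_left T0A)) with (eps := mkposreal e He) in H.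
  destruct H as [d Hdd]. exists d. split. apply cond_pos.
  intros y Hy. apply (Hdd y). 2: lra.
  unfold ball; simpl; unfold AbsRing_ball, abs, minus, plus, opp; simpl.
  rewrite Rabs_left; lra.
Qed.

Lemma main (T0g : R) : 0 < T0g -> T0g < T0A ->
  filterlim S (at_right 0) (locally (S 0)) ->
  filterlim S (at_left T0A) (locally (S T0A)) ->
  (forall T0, 0 < T0 < T0A -> sigma T0 <= 0) ->
  (forall T0, 0 < T0 < T0g -> sigma T0 < 0) ->
  S 0 > S T0A + RInt f T0A 0.
Proof.
  intros Hg HgA L0 LA Hs Hs'.
  set (c := T0g / 4). set (d := T0g / 2).
  destruct (G_mvt c d) as [xi [Hxi Ecd]]; unfold c, d; try lra.
  set (delta := G c - G d).
  assert (Hdel : 0 < delta).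
  { unfold delta. assert (sigma xi < 0) by (apply Hs'; unfold c, d in *; lra).
    assert (sigma xi * (d - c) < 0). { apply Rmult_neg_pos; auto. unfold c, d; lra. }
    lra. }
  set (e := delta / 5).
  assert (He : 0 < e) by (unfold e; lra).
  destruct (ex_RInt_ub f 0 T0A Hi) as [M HM].
  rewrite Rmin_left in HM by lra. rewrite Rmax_right in HM by lra.
  set (M' := Rabs M + 1).
  assert (HM'p : 0 < M') by (unfold M'; pose proof (Rabs_pos M); lra).
  assert (HM' : forall t, 0 <= t <= T0A -> Rabs (f t) <= M').
  { intros t Ht. specialize (HM t Ht). unfold M'.
    pose proof (Rle_abs M). change (norm (f t)) with (Rabs (f t)) in HM. lra. }
  pose proof (F_lip M' HM') as Lip.
  destruct (lim_right0 e He L0) as [d1 [Hd1 H1]].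
  destruct (lim_left e He LA) as [d2 [Hd2 H2]].
  set (h := Rmin (c / 2) (Rmin (d1 / 2) (e / (2 * M')))).
  assert (Hh0 : 0 < h).
  { unfold h, c. repeat apply Rmin_pos; try lra; apply Rdiv_lt_0_compat; lra. }
  assert (Hhc : h <= c / 2) by apply Rmin_l.
  assert (Hhd : h <= d1 / 2) by (eapply Rle_trans; [apply Rmin_r| apply Rmin_l]).
  assert (Hhe : h <= e / (2 * M')) by (eapply Rle_trans; [apply Rmin_r| apply Rmin_r]).
  assert (HhM : h * M' <= e / 2).
  { apply Rle_trans with (e / (2 * M') * M'). apply Rmult_le_compat_r; lra.
    right; field; lra. }
  set (k := Rmin ((T0A - d) / 2) (Rmin (d2 / 2) (e / (2 * M')))).
  assert (Hk0 : 0 < k).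
  { unfold k, d. repeat apply Rmin_pos; try lra; apply Rdiv_lt_0_compat; lra. }
  assert (Hkc : k <= (T0A - d) / 2) by apply Rmin_l.
  assert (Hkd : k <= d2 / 2) by (eapply Rle_trans; [apply Rmin_r| apply Rmin_l]).
  assert (Hke : k <= e / (2 * M')) by (eapply Rle_trans; [apply Rmin_r| apply Rmin_r]).
  assert (HkM : k * M' <= e / 2).
  { apply Rle_trans with (e / (2 * M') * M'). apply Rmult_le_compat_r; lra.
    right; field; lra. }
  set (a := h). set (b := T0A - k).
  assert (Hcd : c < d) by (unfold c, d; lra).
  assert (Hc0 : 0 < c) by (unfold c; lra).
  assert (Ha0 : 0 < a < c) by (unfold a; lra).
  assert (Hb0 : d < b < T0A) by (unfold b; lra).
  assert (HdA : d < T0A) by (unfold d; lra).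
  destruct (G_mvt a c) as [x1 [Hx1 E1]]; [unfold a; lra | unfold a; lra | lra |].
  assert (P1 : sigma x1 * (c - a) <= 0).
  { assert (sigma x1 <= 0) by (apply Hs; lra).
    assert (0 <= c - a) by (unfold a; lra). nra. }
  destruct (G_mvt d b) as [x2 [Hx2 E2]]; [lra | unfold b; lra | unfold b; lra |].
  assert (P2 : sigma x2 * (b - d) <= 0).
  { assert (sigma x2 <= 0) by (apply Hs; unfold b in *; lra).
    assert (0 <= b - d) by (unfold b; lra). nra. }
  assert (Sa : Rabs (S a - S 0) < e) by (apply H1; unfold a; lra).
  assert (Sb : Rabs (S b - S T0A) < e) by (apply H2; unfold b; lra).
  assert (Fa : Rabs (RInt f 0 a - RInt f 0 0) <= (a - 0) * M') by (apply Lip; unfold a; lra).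
  assert (Fb : Rabs (RInt f 0 T0A - RInt f 0 b) <= (T0A - b) * M') by (apply Lip; unfold b; lra).
  rewrite RInt_point in Fa.
  replace (T0A - b) with k in Fb by (unfold b; ring).
  replace (a - 0) with h in Fa by (unfold a; ring).
  rewrite <- (opp_RInt_swap (V:=R_CompleteNormedModule) f 0 T0A Hi).
  change (opp (RInt f 0 T0A)) with (- RInt f 0 T0A).
  change (zero : R_CompleteNormedModule) with 0 in Fa.
  apply Rabs_def2 in Sa. apply Rabs_def2 in Sb.
  apply Rabs_le_between in Fa. apply Rabs_le_between in Fb.
  assert (Ed : delta = G c - G d) by reflexivity. assert (Eah : a = h) by reflexivity.
  unfold G in *. unfold e in *. lra.
Qed.
End X.

(* The cooling path is parametrized by the medium temperature T0 in [0, T0A].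
   S T0   : entropy of the system along the path (state function);
   CP T0  : measured isobaric heat capacity (no latent heat: CP continuous);
   sigma T0 : d_iS/dT0, entropy generated internally per unit change of T0.
   dS = d_eS + d_iS with d_eS = CP dT0/T0 reads S'(T0) = CP(T0)/T0 + sigma(T0).
   Since cooling means dT0 < 0, the second law d_iS >= 0 reads sigma <= 0,
   and irreversibility of vitrification below T0g reads sigma < 0 there. *)
Theorem theorem1 (T0g T0A : R) (S CP sigma : R -> R) :
  0 < T0g -> T0g < T0A ->
  (forall T0, 0 < T0 < T0A -> continuous CP T0) ->
  ex_RInt (fun T0 => CP T0 / T0) 0 T0A ->
  (forall T0, 0 < T0 < T0A -> is_derive S T0 (CP T0 / T0 + sigma T0)) ->
  filterlim S (at_right 0) (locally (S 0)) ->
  filterlim S (at_left T0A) (locally (S T0A)) ->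
  (forall T0, 0 < T0 < T0A -> sigma T0 <= 0) ->
  (forall T0, 0 < T0 < T0g -> sigma T0 < 0) ->
  S 0 > S_expt S CP T0A.
Proof.
  intros Hg HgA Hc Hi Hd L0 LA Hs Hs'.
  unfold S_expt.
  exact (main T0A S CP sigma Hc Hi Hd T0g Hg HgA L0 LA Hs Hs').
Qed.
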